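(* For $O=(a,b)\in\mathbb{R}^2$ let $g_1(O):=\int_0^1\int_0^1\sqrt{(x-a)^2+(y-b)^2}\,dx\,dy$ (the expected distance from $O$ to a uniform random point of $[0,1]^2$). Then \begin{align*}g_1(O)=\;&A_1(a,b)+A_1(b,a)+A_1(b,1-a)+A_1(1-a,b)\\&+A_1(1-a,1-b)+A_1(1-b,1-a)+A_1(1-b,a)+A_1(a,1-b).\end{align*}
   Context: Define $A_1:\mathbb{R}^2\to\mathbb{R}$ by $A_1(a,b):=\int_0^a\int_0^{bx/a}\sqrt{x^2+y^2}\,dy\,dx$ if $a\ne0$ and $A_1(0,b):=0$ (integrals are oriented/signed). Equivalently, for $a\neq 0$, $A_1(a,b)=\frac{a^3}{6}\log\left(\frac{b}{|a|}+\sqrt{1+\frac{b^2}{a^2}}\right)+\frac{ab}{6}\sqrt{a^2+b^2}$. *)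

(* Defs.v *)
From Stdlib Require Import Reals.
From Coquelicot Require Import Coquelicot.
Open Scope R_scope.

(* A_1(a,b) := int_0^a int_0^{b x / a} sqrt(x^2+y^2) dy dx  (a <> 0),
   A_1(0,b) := 0.  Integrals are oriented (RInt f u v = - RInt f v u). *)
Definition A_1 (a b : R) : R :=
  if Req_EM_T a 0 then 0
  else RInt (fun x => RInt (fun y => sqrt (x ^ 2 + y ^ 2)) 0 (b * x / a)) 0 a.

Definition g_1 (a b : R) : R :=
  RInt (fun y => RInt (fun x => sqrt ((x - a) ^ 2 + (y - b) ^ 2)) 0 1) 0 1.

(* Main.v *)
Require Import Defs.
From Stdlib Require Import Reals Lra.
From Coquelicot Require Import Coquelicot.
Open Scope R_scope.

Definition J (m : R) : R := RInt (fun s => sqrt (1 + s ^ 2)) 0 m.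

Lemma J_cont_int : forall x, continuous (fun s => sqrt (1 + s ^ 2)) x.
Proof. intros x. apply continuous_sqrt_comp.
  apply (ex_derive_continuous (fun s : R => 1 + s^2)). auto_derive. auto. Qed.

Lemma J_ex : forall a b, ex_RInt (fun s => sqrt (1 + s ^ 2)) a b.
Proof. intros. apply (ex_RInt_continuous (V:=R_CompleteNormedModule)). intros; apply J_cont_int. Qed.

Lemma J_derive : forall m, is_derive J m (sqrt (1 + m ^ 2)).
Proof.
  intros m. apply (is_derive_RInt (fun s => sqrt (1 + s ^ 2)) J 0).
  - apply filter_forall. intros b. unfold J. apply (RInt_correct (V:=R_CompleteNormedModule)). apply J_ex.
  - apply J_cont_int.
Qed.

Lemma J_odd : forall m, J (- m) = - J m.
Proof.
  intros m. unfold J.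
  assert (H := RInt_comp_lin (fun s => sqrt (1 + s ^ 2)) (-1) 0 0 m (J_ex _ _)).
  replace (-1 * 0 + 0) with 0 in H by ring. replace (-1 * m + 0) with (-m) in H by ring.
  rewrite <- H.
  transitivity (RInt (fun y => scal (-1) (sqrt (1 + y ^ 2))) 0 m).
  { apply RInt_ext. intros x _. f_equal. f_equal. ring. }
  rewrite (RInt_scal (V:=R_CompleteNormedModule)). 2: apply J_ex.
  unfold scal; simpl; unfold mult; simpl. ring.
Qed.

Lemma J_bound : forall m, Rabs (J m) <= Rabs m * (1 + Rabs m).
Proof.
  intros m. destruct (Rle_or_lt 0 m) as [H|H].
  - unfold J. eapply Rle_trans. apply abs_RInt_le_const with (M := 1 + m); auto. apply J_ex.
    intros t Ht. rewrite Rabs_pos_eq by apply sqrt_pos.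
    rewrite <- (sqrt_pow2 (1 + m)) by lra. apply sqrt_le_1_alt. simpl. destruct Ht; nra.
    rewrite !Rabs_pos_eq by lra. lra.
  - replace m with (- (-m)) by ring. rewrite J_odd, Rabs_Ropp, Rabs_Ropp.
    unfold J. eapply Rle_trans. apply abs_RInt_le_const with (M := 1 + -m); try lra. apply J_ex.
    intros t Ht. rewrite Rabs_pos_eq by apply sqrt_pos.
    rewrite <- (sqrt_pow2 (1 + -m)) by lra. apply sqrt_le_1_alt. simpl. destruct Ht; nra.
    rewrite !Rabs_pos_eq by lra. lra.
Qed.

Lemma sqrt_lip : forall s c d, Rabs (sqrt (s ^ 2 + c ^ 2) - sqrt (s ^ 2 + d ^ 2)) <= Rabs (c - d).
Proof.
  intros s c d.
  assert (HA := sqrt_sqrt (s^2 + c^2)). assert (HB := sqrt_sqrt (s^2 + d^2)).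
  assert (A0 := sqrt_pos (s^2 + c^2)). assert (B0 := sqrt_pos (s^2 + d^2)).
  set (A := sqrt (s^2 + c^2)) in *. set (B := sqrt (s^2+d^2)) in *.
  assert (HA' : A * A = s^2 + c^2) by (apply HA; nra).
  assert (HB' : B * B = s^2 + d^2) by (apply HB; nra).
  assert (AB : A * B >= s^2 + c * d).
  { destruct (Rle_or_lt (s^2 + c*d) 0). nra.
    assert ((A*B)*(A*B) >= (s^2 + c*d) * (s^2 + c*d)).
    { replace ((A*B)*(A*B)) with ((A*A)*(B*B)) by ring. rewrite HA', HB'. assert (0 <= s^2 * (c-d)^2) by (apply Rmult_le_pos; apply pow2_ge_0). nra. }
    assert (0 <= A*B) by (apply Rmult_le_pos; auto). destruct (Rle_or_lt (s^2 + c*d) (A*B)); [lra|]. assert ((A*B)*(A*B) < (s^2+c*d)*(s^2+c*d)) by (apply Rmult_le_0_lt_compat; lra). lra. }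
  apply Rsqr_le_abs_0. unfold Rsqr. nra.
Qed.

Lemma RInt_bound : forall (f : R -> R) a b M, ex_RInt f a b ->
  (forall x, Rmin a b <= x <= Rmax a b -> Rabs (f x) <= M) ->
  Rabs (RInt f a b) <= Rabs (b - a) * M.
Proof.
  intros f a b M Hex Hb. destruct (Rle_or_lt a b) as [H|H].
  - replace (Rabs (b - a)) with (b - a) by (rewrite Rabs_pos_eq; lra). apply abs_RInt_le_const; auto.
    intros t Ht; apply Hb. rewrite Rmin_left, Rmax_right; lra.
  - rewrite <- (opp_RInt_swap (V:=R_CompleteNormedModule) f b a) by (apply ex_RInt_swap; auto).
    change (opp (RInt f b a)) with (- RInt f b a). rewrite Rabs_Ropp.
    replace (Rabs (b - a)) with (a - b) by (rewrite Rabs_left; lra).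
    apply abs_RInt_le_const; auto. lra. apply ex_RInt_swap; auto.
    intros t Ht; apply Hb. rewrite Rmin_right, Rmax_left; lra.
Qed.

Definition I (t c : R) : R := RInt (fun s => sqrt (s ^ 2 + c ^ 2)) 0 t.

Lemma I_cont_int : forall c x, continuous (fun s => sqrt (s ^ 2 + c ^ 2)) x.
Proof. intros c x. apply continuous_sqrt_comp.
  apply (ex_derive_continuous (fun s : R => s ^ 2 + c^2)). auto_derive. auto. Qed.

Lemma I_ex : forall c a b, ex_RInt (fun s => sqrt (s ^ 2 + c ^ 2)) a b.
Proof. intros. apply (ex_RInt_continuous (V:=R_CompleteNormedModule)). intros; apply I_cont_int. Qed.

Lemma I_lip : forall t c d, Rabs (I t c - I t d) <= Rabs t * Rabs (c - d).
Proof.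
  intros t c d. unfold I.
  change (RInt (fun s => sqrt (s ^ 2 + c ^ 2)) 0 t - RInt (fun s => sqrt (s ^ 2 + d ^ 2)) 0 t)
    with (minus (RInt (fun s => sqrt (s ^ 2 + c ^ 2)) 0 t) (RInt (fun s => sqrt (s ^ 2 + d ^ 2)) 0 t)).
  rewrite <- (RInt_minus (V:=R_CompleteNormedModule)) by apply I_ex.
  replace (Rabs t) with (Rabs (t - 0)) by (f_equal; ring).
  apply RInt_bound.
  - apply (ex_RInt_minus (V:=R_CompleteNormedModule)); apply I_ex.
  - intros x _. apply sqrt_lip.
Qed.

Lemma I_cont : forall t c, continuous (I t) c.
Proof.
  intros t c. apply continuity_pt_filterlim.
  intros eps Heps. exists (eps / (Rabs t + 1)). split.
  { apply Rdiv_lt_0_compat; auto. assert (0 <= Rabs t) by apply Rabs_pos. lra. }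
  intros x [_ Hx]. simpl in *. unfold R_dist in *.
  eapply Rle_lt_trans. apply I_lip.
  assert (0 <= Rabs t) by apply Rabs_pos.
  assert (0 <= Rabs (x - c)) by apply Rabs_pos.
  apply Rmult_lt_compat_r with (r := Rabs t + 1) in Hx; [|lra].
  unfold Rdiv in Hx. rewrite Rmult_assoc, Rinv_l in Hx by lra. nra.
Qed.

Lemma I_bound : forall t c, Rabs (I t c) <= Rabs t * (Rabs t + Rabs c).
Proof.
  intros t c. unfold I. replace (Rabs t) with (Rabs (t - 0)) at 1 by (f_equal; ring).
  apply RInt_bound. apply I_ex.
  intros x Hx. rewrite Rabs_pos_eq by apply sqrt_pos.
  assert (Hx' : Rabs x <= Rabs t).
  { destruct (Rle_or_lt 0 t).
    - rewrite Rmin_left, Rmax_right in Hx by lra. rewrite !Rabs_pos_eq; lra.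
    - rewrite Rmin_right, Rmax_left in Hx by lra. rewrite !Rabs_left1; lra. }
  assert (0 <= Rabs x) by apply Rabs_pos. assert (0 <= Rabs c) by apply Rabs_pos.
  rewrite <- (sqrt_pow2 (Rabs t + Rabs c)) by lra. apply sqrt_le_1_alt.
  rewrite <- (pow2_abs x), <- (pow2_abs c). nra.
Qed.

Lemma sqrt_scale : forall c s, c <> 0 -> sqrt (s ^ 2 + c ^ 2) = Rabs c * sqrt (1 + (s / Rabs c) ^ 2).
Proof.
  intros c s Hc. assert (Hc' : 0 < Rabs c) by (apply Rabs_pos_lt; auto).
  assert (P1 : 0 <= Rabs c ^ 2) by apply pow2_ge_0.
  assert (P2 : 0 <= 1 + (s / Rabs c)^2) by (assert (0 <= (s / Rabs c)^2) by apply pow2_ge_0; lra).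
  rewrite <- (sqrt_pow2 (Rabs c)) at 1 by lra. rewrite <- sqrt_mult by auto.
  f_equal. rewrite pow2_abs. field_simplify; [|lra]. rewrite pow2_abs. field. lra.
Qed.

Lemma I_scale : forall t c, c <> 0 -> I t c = c ^ 2 * J (t / Rabs c).
Proof.
  intros t c Hc. assert (Hc' : 0 < Rabs c) by (apply Rabs_pos_lt; auto).
  assert (H := RInt_comp_lin (fun s => sqrt (1 + s ^ 2)) (/ Rabs c) 0 0 t (J_ex _ _)).
  replace (/ Rabs c * 0 + 0) with 0 in H by ring.
  replace (/ Rabs c * t + 0) with (t / Rabs c) in H by (unfold Rdiv; ring).
  unfold J. rewrite <- H.
  rewrite <- (RInt_scal (V:=R_CompleteNormedModule)).
  2: { apply (ex_RInt_continuous (V:=R_CompleteNormedModule)). intros z _.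
       apply (continuous_scal_r (K:=R_AbsRing) (V:=R_NormedModule)).
       apply (continuous_comp (fun y => / Rabs c * y + 0) (fun s => sqrt (1 + s ^ 2))).
       apply (ex_derive_continuous (fun y : R => / Rabs c * y + 0)). auto_derive. auto.
       apply J_cont_int. }
  unfold I. apply RInt_ext. intros x _.
  change (scal (/ Rabs c) ?y) with (/ Rabs c * y). change (scal (c^2) ?y) with (c^2 * y).
  rewrite (sqrt_scale c x Hc).
  replace (/ Rabs c * x + 0) with (x / Rabs c) by (unfold Rdiv; ring).
  rewrite <- (pow2_abs c). set (q := sqrt _). replace (Rabs c ^ 2 * (/ Rabs c * q)) with (Rabs c * q). reflexivity. field. lra.
Qed.

Lemma RInt_cube : forall K a, RInt (fun x => x ^ 2 * K) 0 a = K * a ^ 3 / 3.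
Proof.
  intros K a. apply is_RInt_unique.
  replace (K * a ^ 3 / 3) with (minus (K * a ^ 3 / 3) (K * 0 ^ 3 / 3)) by (unfold minus, plus, opp; simpl; field).
  apply (is_RInt_derive (V:=R_CompleteNormedModule) (fun x => K * x ^ 3 / 3)).
  - intros x _. auto_derive. auto. field.
  - intros x _. apply (ex_derive_continuous (fun x : R => x^2 * K)). auto_derive. auto.
Qed.

Lemma A1_closed : forall a b, a <> 0 -> A_1 a b = a ^ 3 / 3 * J (b / Rabs a).
Proof.
  intros a b Ha. unfold A_1. destruct (Req_EM_T a 0) as [E|_]. contradiction.
  transitivity (RInt (fun x => x ^ 2 * J (b / Rabs a)) 0 a).
  - apply RInt_ext. intros x Hx.
    assert (Hx0 : x <> 0 /\ (b * x / a) / Rabs x = b / Rabs a).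
    { destruct (Rlt_or_le 0 a).
      - rewrite Rmin_left, Rmax_right in Hx by lra.
        rewrite !Rabs_pos_eq by lra. split. lra. field. lra.
      - rewrite Rmin_right, Rmax_left in Hx by lra.
        rewrite !Rabs_left by lra. split. lra. field. lra. }
    destruct Hx0 as [Hx0 Heq].
    rewrite <- Heq, <- I_scale by auto. unfold I. apply RInt_ext. intros y _. f_equal. ring.
  - rewrite RInt_cube. field.
Qed.

Lemma A1_odd1 : forall a b, A_1 (- a) b = - A_1 a b.
Proof.
  intros a b. destruct (Req_EM_T a 0) as [E|E].
  - subst. unfold A_1. rewrite Ropp_0. destruct (Req_EM_T 0 0); [ring| contradiction].
  - rewrite !A1_closed; auto. rewrite Rabs_Ropp. field. lra.
Qed.

Lemma A1_odd2 : forall a b, A_1 a (- b) = - A_1 a b.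
Proof.
  intros a b. destruct (Req_EM_T a 0) as [E|E].
  - subst. unfold A_1. destruct (Req_EM_T 0 0); [ring| contradiction].
  - rewrite !A1_closed; auto. unfold Rdiv. rewrite Ropp_mult_distr_l_reverse, J_odd. ring.
Qed.

Lemma A1_zero2 : forall a, A_1 a 0 = 0.
Proof. intros a. replace 0 with (-0) at 1 by ring. rewrite A1_odd2 at 1. 
Abort.
Lemma DJ : forall y, Derive (fun x => J x) y = sqrt (1 + y ^ 2).
Proof. intros y. apply is_derive_unique. apply J_derive. Qed.
Definition F (t x : R) := t^3/3 * J (x / Rabs t) + x^3/3 * J (t / Rabs x).
Lemma F_derive : forall t x, t <> 0 -> x <> 0 -> is_derive (F t) x (I t x).
Proof.
intros t x Ht Hx. unfold F. auto_derive.
{ repeat split; try (eexists; apply J_derive); auto. apply Rabs_no_R0; auto. }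
rewrite !DJ. rewrite (I_scale t x Hx).
assert (E1 := sqrt_scale t x Ht). assert (E2 := sqrt_scale x t Hx). unfold Rdiv in E1, E2.
assert (At : 0 < Rabs t) by (apply Rabs_pos_lt; auto).
assert (Ax : 0 < Rabs x) by (apply Rabs_pos_lt; auto).
replace (sqrt (1 + (x * / Rabs t)^2)) with (sqrt (x^2 + t^2) / Rabs t) by (rewrite E1; field; lra).
replace (sqrt (1 + (t * / Rabs x)^2)) with (sqrt (t^2 + x^2) / Rabs x) by (rewrite E2; field; lra).
replace (t^2 + x^2) with (x^2+t^2) by ring.
unfold Rdiv. set (S := sqrt (x^2 + t^2)). set (JJ := J (t * / Rabs x)).
destruct (Rlt_or_le 0 x) as [X|X]; [rewrite (sign_eq_1 x X), (Rabs_pos_eq x) by lra | rewrite (sign_eq_m1 x) by lra; rewrite (Rabs_left x) by lra];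
(destruct (Rlt_or_le 0 t) as [T|T]; [rewrite (Rabs_pos_eq t) by lra | rewrite (Rabs_left t) by lra]); field; lra.
Qed.

Lemma Rabs_div_abs : forall e t, t <> 0 -> Rabs (e / Rabs t) = Rabs e / Rabs t.
Proof. intros e t Ht. unfold Rdiv. rewrite Rabs_mult, Rabs_inv, Rabs_Rabsolu. reflexivity. Qed.

Lemma F_bound : forall t e, t <> 0 -> e <> 0 ->
  Rabs (F t e) <= 2 / 3 * Rabs e * Rabs t * (Rabs t + Rabs e).
Proof.
  intros t e Ht He. unfold F.
  assert (A : 0 < Rabs t) by (apply Rabs_pos_lt; auto).
  assert (B : 0 < Rabs e) by (apply Rabs_pos_lt; auto).
  assert (J1 := J_bound (e / Rabs t)). assert (J2 := J_bound (t / Rabs e)).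
  rewrite Rabs_div_abs in J1, J2 by auto.
  eapply Rle_trans. apply Rabs_triang. rewrite !Rabs_mult.
  replace (Rabs (t^3/3)) with (Rabs t ^ 3 / 3) by (unfold Rdiv; rewrite Rabs_mult, <- RPow_abs, Rabs_inv, (Rabs_pos_eq 3) by lra; reflexivity).
  replace (Rabs (e^3/3)) with (Rabs e ^ 3 / 3) by (unfold Rdiv; rewrite Rabs_mult, <- RPow_abs, Rabs_inv, (Rabs_pos_eq 3) by lra; reflexivity).
  set (a := Rabs t) in *. set (b := Rabs e) in *.
  set (u := Rabs (J (e / a))) in *. set (v := Rabs (J (t / b))) in *.
  assert (U : a ^ 3 / 3 * u <= a ^ 3 / 3 * (b / a * (1 + b / a))).
  { apply Rmult_le_compat_l; auto. assert (0 < a^3) by (apply pow_lt; auto). lra. }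
  assert (V : b ^ 3 / 3 * v <= b ^ 3 / 3 * (a / b * (1 + a / b))).
  { apply Rmult_le_compat_l; auto. assert (0 < b^3) by (apply pow_lt; auto). lra. }
  replace (a ^ 3 / 3 * (b / a * (1 + b / a))) with ((a*a*b + a*b*b)/3) in U by (field; lra).
  replace (b ^ 3 / 3 * (a / b * (1 + a / b))) with ((a*b*b + a*a*b)/3) in V by (field; lra).
  replace (2 / 3 * b * a * (a + b)) with ((a*a*b + a*b*b)/3 + (a*b*b + a*a*b)/3) by field.
  lra.
Qed.

Definition Dr (t w : R) : R := RInt (fun c => I t c) 0 w.

Lemma I_exc : forall t a b, ex_RInt (fun c => I t c) a b.
Proof. intros. apply (ex_RInt_continuous (V:=R_CompleteNormedModule)). intros; apply I_cont. Qed.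

Lemma D_bound : forall t e, Rabs (Dr t e) <= Rabs e * (Rabs t * (Rabs t + Rabs e)).
Proof.
  intros t e. unfold Dr. replace (Rabs e) with (Rabs (e - 0)) at 1 by (f_equal; ring).
  apply RInt_bound. apply I_exc.
  intros x Hx. eapply Rle_trans. apply I_bound.
  assert (Hx' : Rabs x <= Rabs e).
  { destruct (Rle_or_lt 0 e).
    - rewrite Rmin_left, Rmax_right in Hx by lra. rewrite !Rabs_pos_eq; lra.
    - rewrite Rmin_right, Rmax_left in Hx by lra. rewrite !Rabs_left1; lra. }
  assert (0 <= Rabs t) by apply Rabs_pos. nra.
Qed.

Lemma D_shift : forall t w th, t <> 0 -> w <> 0 -> 0 < th <= 1 ->
  Dr t w - F t w = Dr t (th * w) - F t (th * w).
Proof.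
  intros t w th Ht Hw Hth.
  assert (H1 : Dr t w = Dr t (th * w) + RInt (fun c => I t c) (th * w) w).
  { unfold Dr. symmetry. apply (RInt_Chasles (V:=R_CompleteNormedModule)); apply I_exc. }
  assert (H2 : RInt (fun c => I t c) (th * w) w = F t w - F t (th * w)).
  { apply is_RInt_unique.
    apply (is_RInt_derive (V:=R_CompleteNormedModule) (F t) (fun c => I t c)).
    - intros x Hx. apply F_derive; auto.
      destruct (Rlt_or_le 0 w).
      + rewrite Rmin_left, Rmax_right in Hx by nra. nra.
      + assert (w < 0) by lra. rewrite Rmin_right, Rmax_left in Hx by nra. nra.
    - intros x _. apply I_cont. }
  rewrite H1, H2. ring.
Qed.

Lemma D_main : forall t w, t <> 0 -> w <> 0 -> Dr t w = F t w.
Proof.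
  intros t w Ht Hw.
  assert (Aw : 0 < Rabs w) by (apply Rabs_pos_lt; auto).
  assert (At : 0 < Rabs t) by (apply Rabs_pos_lt; auto).
  set (K := 2 * Rabs t * (Rabs t + Rabs w)).
  assert (HK : 0 < K) by (unfold K; nra).
  assert (Hb : forall th, 0 < th <= 1 -> Rabs (Dr t w - F t w) <= th * (Rabs w * K)).
  { intros th Hth. rewrite (D_shift t w th) by auto.
    assert (Hthw : th * w <> 0) by (apply Rmult_integral_contrapositive; split; lra).
    assert (E : Rabs (th * w) = th * Rabs w) by (rewrite Rabs_mult, Rabs_pos_eq by lra; ring).
    assert (B1 := D_bound t (th * w)). assert (B2 := F_bound t (th * w) Ht Hthw).
    rewrite E in B1, B2.
    unfold Rminus. eapply Rle_trans. apply Rabs_triang. rewrite Rabs_Ropp.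
    assert (th * Rabs w <= Rabs w) by nra.
    assert (0 <= th * Rabs w) by nra.
    assert (Rabs t * (Rabs t + th * Rabs w) <= Rabs t * (Rabs t + Rabs w)) by nra.
    assert (th * Rabs w * (Rabs t * (Rabs t + th * Rabs w)) <= th * Rabs w * (Rabs t * (Rabs t + Rabs w))) by nra.
    replace (2 / 3 * (th * Rabs w) * Rabs t * (Rabs t + th * Rabs w)) with
      (2 / 3 * (th * Rabs w * (Rabs t * (Rabs t + th * Rabs w)))) in B2 by field.
    replace (th * (Rabs w * K)) with (2 * (th * Rabs w * (Rabs t * (Rabs t + Rabs w)))) by (unfold K; ring).
    assert (0 <= th * Rabs w * (Rabs t * (Rabs t + Rabs w))) by (apply Rmult_le_pos; nra).
    lra. }
  set (C := Dr t w - F t w) in *.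
  destruct (Req_dec C 0) as [E|E]. unfold C in E; lra.
  exfalso. assert (AC : 0 < Rabs C) by (apply Rabs_pos_lt; auto).
  set (th := Rmin 1 (Rabs C / (2 * (Rabs w * K)))).
  assert (P : 0 < Rabs w * K) by nra.
  assert (Th1 : 0 < th) by (unfold th; apply Rmin_pos; [lra| apply Rdiv_lt_0_compat; lra]).
  assert (Th2 : th <= 1) by (unfold th; apply Rmin_l).
  assert (Th3 : th <= Rabs C / (2 * (Rabs w * K))) by (unfold th; apply Rmin_r).
  specialize (Hb th (conj Th1 Th2)).
  assert (th * (Rabs w * K) <= Rabs C / 2).
  { apply Rmult_le_compat_r with (r := Rabs w * K) in Th3; [|lra].
    replace (Rabs C / (2 * (Rabs w * K)) * (Rabs w * K)) with (Rabs C / 2) in Th3 by (field; lra). lra. }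
  lra.
Qed.

Lemma D_eq : forall t w, Dr t w = A_1 t w + A_1 w t.
Proof.
  intros t w.
  assert (J0 : J 0 = 0) by (assert (H := J_bound 0); rewrite Rabs_R0 in H; apply Rabs_eq_0; assert (0 <= Rabs (J 0)) by apply Rabs_pos; lra).
  assert (A0 : forall x, A_1 0 x = 0) by (intros; unfold A_1; destruct (Req_EM_T 0 0); [reflexivity|contradiction]).
  assert (A0' : forall x, A_1 x 0 = 0).
  { intros x. destruct (Req_EM_T x 0) as [E|E]. subst; apply A0.
    rewrite A1_closed by auto. unfold Rdiv at 2. rewrite Rmult_0_l, J0. ring. }
  destruct (Req_EM_T t 0) as [Et|Et].
  { subst. rewrite A0, A0'. assert (H := D_bound 0 w). rewrite Rabs_R0 in H.
    rewrite Rplus_0_r. apply Rabs_eq_0. assert (0 <= Rabs (Dr 0 w)) by apply Rabs_pos. nra. }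
  destruct (Req_EM_T w 0) as [Ew|Ew].
  { subst. rewrite A0, A0'. assert (H := D_bound t 0). rewrite Rabs_R0 in H.
    rewrite Rplus_0_r. apply Rabs_eq_0. assert (0 <= Rabs (Dr t 0)) by apply Rabs_pos. nra. }
  rewrite D_main by auto. unfold F. rewrite !A1_closed by auto. reflexivity.
Qed.

Lemma shift_int : forall (h : R -> R), (forall z, continuous h z) -> forall p,
  RInt (fun x => h (x - p)) 0 1 = RInt h 0 (1 - p) - RInt h 0 (- p).
Proof.
  intros h Hc p.
  assert (Ex : forall u v, ex_RInt h u v) by (intros; apply (ex_RInt_continuous (V:=R_CompleteNormedModule)); intros; apply Hc).
  assert (H := RInt_comp_lin h 1 (-p) 0 1 (Ex _ _)).
  replace (1 * 0 + - p) with (- p) in H by ring. replace (1 * 1 + - p) with (1 - p) in H by ring.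
  transitivity (RInt h (- p) (1 - p)).
  - rewrite <- H. apply RInt_ext. intros x _. change (scal 1 ?y) with (1 * y).
    replace (1 * x + - p) with (x - p) by ring. rewrite Rmult_1_l. reflexivity.
  - rewrite <- (RInt_Chasles (V:=R_CompleteNormedModule) h (-p) 0 (1 - p)) by apply Ex.
    rewrite <- (opp_RInt_swap (V:=R_CompleteNormedModule) h 0 (-p)) by apply Ex.
    change (plus (opp (RInt h 0 (-p))) (RInt h 0 (1 - p)) = RInt h 0 (1 - p) - RInt h 0 (- p)).
    unfold plus, opp; simpl. ring.
Qed.

Lemma g1_D : forall a b, g_1 a b = Dr (1 - a) (1 - b) - Dr (1 - a) (- b) - Dr (- a) (1 - b) + Dr (- a) (- b).
Proof.
  intros a b. unfold g_1.
  transitivity (RInt (fun y => I (1 - a) (y - b) - I (- a) (y - b)) 0 1).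
  { apply RInt_ext. intros y _. unfold I.
    apply (shift_int (fun s => sqrt (s ^ 2 + (y - b) ^ 2))). intros; apply I_cont_int. }
  assert (Cc : forall t z, continuous (fun y => I t (y - b)) z).
  { intros t z. apply (continuous_comp (fun y => y - b) (I t)).
    apply (ex_derive_continuous (fun y : R => y - b)). auto_derive. auto. apply I_cont. }
  assert (Ex : forall t, ex_RInt (fun y => I t (y - b)) 0 1).
  { intros t. apply (ex_RInt_continuous (V:=R_CompleteNormedModule)). intros; apply Cc. }
  assert (M := RInt_minus (V:=R_CompleteNormedModule) _ _ 0 1 (Ex (1 - a)) (Ex (- a))).
  etransitivity; [exact M|].
  unfold minus, plus, opp; simpl.
  rewrite !(shift_int (fun c => I _ c)) by apply I_cont.
  unfold Dr. ring.
Qed.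

Theorem theorem24 (a b : R) :
  g_1 a b =
    A_1 a b + A_1 b a + A_1 b (1 - a) + A_1 (1 - a) b
  + A_1 (1 - a) (1 - b) + A_1 (1 - b) (1 - a) + A_1 (1 - b) a + A_1 a (1 - b).
Proof.
  rewrite g1_D, !D_eq. rewrite !A1_odd1, !A1_odd2. ring.
Qed.
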